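(* Let $\Lambda$ be a row-finite $k$-graph with no sources and $R$ a commutative ring with $1$. If $\Lambda$ is aperiodic, then a pair $(\alpha,\beta)\in\Lambda\times\Lambda$ with $s(\alpha)=s(\beta)$ is a cycline pair if and only if $\alpha=\beta$. In particular, $\mathcal{M}=\mathcal{D}$.
   Context: A $k$-graph is a countable category $\Lambda$ (vertices $\Lambda^0$, paths, maps $r,s$) with a degree functor $d:\Lambda\to\mathbb{N}^k$ satisfying unique factorization: if $d(\lambda)=m+n$ there are unique $\mu,\nu$ with $s(\mu)=r(\nu)$, $d(\mu)=m,d(\nu)=n$, $\lambda=\mu\nu$. $v\Lambda=\{\lambda:r(\lambda)=v\}$, $v\Lambda^n$ those of degree $n$; row-finite with no sources means each $v\Lambda^n$ is finite and nonempty. ${\rm KP}_R(\Lambda)$ is the universal $R$-algebra generated by $p_v$ ($v\in\Lambda^0$), $s_\lambda,s_{\lambda^*}$ ($d(\lambda)\ne0$) with relations (KP1) $p_v$ mutually orthogonal idempotents; (KP2) $s_\lambda s_\mu=s_{\lambda\mu}$, $s_{\mu^*}s_{\lambda^*}=s_{(\lambda\mu)^*}$, $p_{r(\lambda)}s_\lambda=s_\lambda=s_\lambda p_{s(\lambda)}$, $p_{s(\lambda)}s_{\lambda^*}=s_{\lambda^*}=s_{\lambda^*}p_{r(\lambda)}$ when $r(\mu)=s(\lambda)$; (KP3) $s_{\lambda^*}s_\mu=\delta_{\lambda,\mu}p_{s(\lambda)}$ when $d(\lambda)=d(\mu)$; (KP4) $p_v=\sum_{\lambda\in v\Lambda^n}s_\lambda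 s_{\lambda^*}$ for $n\ne0$. Convention $s_v=s_{v^*}=p_v$. $\mathcal{D}$ is the $R$-subalgebra generated by $\{s_\mu s_{\mu^*}:\mu\in\Lambda\}$. A pair $(\alpha,\beta)$ with $s(\alpha)=s(\beta)$ is a cycline pair if $s_{\alpha\gamma}s_{(\alpha\gamma)^*}=s_{\beta\gamma}s_{(\beta\gamma)^*}$ for all $\gamma\in s(\alpha)\Lambda$; $\mathcal{M}$ is the $R$-subalgebra generated by $\{s_\alpha s_{\beta^*}:(\alpha,\beta)\text{ cycline}\}$. Let $\Omega_k$ be the $k$-graph with objects $\mathbb{N}^k$, morphisms $\{(p,q):p\le q\}$, $r(p,q)=p$, $s(p,q)=q$, $(p,q)(q,t)=(p,t)$, $d(p,q)=q-p$. An infinite path is a degree-preserving functor $x:\Omega_k\to\Lambda$, with range $r(x)=x(0,0)$; for $p\in\mathbb{N}^k$, $\sigma^p(x)(m,n)=x(m+p,n+p)$. An infinite path $x$ is periodic if $\sigma^p(x)=\sigma^q(x)$ for some $p\ne q$ in $\mathbb{N}^k$, and aperiodic otherwise. $\Lambda$ is aperiodic if for every $v\in\Lambda^0$ there is an aperiodic infinite path with range $v$. *)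

(* Defs.v *)
From HB Require Import structures.
From mathcomp Require Import all_boot all_order all_algebra.
Set Implicit Arguments. Unset Strict Implicit. Unset Printing Implicit Defensive.
Import GRing.Theory.
Local Open Scope ring_scope.

Definition dg (k : nat) := {ffun 'I_k -> nat}.
Definition d0 (k : nat) : dg k := [ffun _ => 0%N].
Definition dadd k (m n : dg k) : dg k := [ffun i => (m i + n i)%N].
Definition dsub k (m n : dg k) : dg k := [ffun i => (m i - n i)%N].
Definition dle k (m n : dg k) : bool := [forall i, (m i <= n i)%N].

(* k-graphs: countable categories with a degree functor satisfying     *)
(* unique factorisation. Composition is a total function whose values  *)
(* on non-composable pairs are irrelevant. kcomp l m = "l m" with      *)
(* ksrc l = krng m.                                                    *)
Record kgraph (k : nat) := KGraph {
  kvert : countType;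
  kpath : countType;
  krng : kpath -> kvert;
  ksrc : kpath -> kvert;
  kid : kvert -> kpath;
  kcomp : kpath -> kpath -> kpath;
  kdeg : kpath -> dg k;
  kid_rng : forall v, krng (kid v) = v;
  kid_src : forall v, ksrc (kid v) = v;
  kcomp_rng : forall l m, ksrc l = krng m -> krng (kcomp l m) = krng l;
  kcomp_src : forall l m, ksrc l = krng m -> ksrc (kcomp l m) = ksrc m;
  kcomp_idl : forall l, kcomp (kid (krng l)) l = l;
  kcomp_idr : forall l, kcomp l (kid (ksrc l)) = l;
  kcomp_assoc : forall l m n, ksrc l = krng m -> ksrc m = krng n ->
      kcomp (kcomp l m) n = kcomp l (kcomp m n);
  kdeg_id : forall v, kdeg (kid v) = d0 k;
  kdeg_comp : forall l m, ksrc l = krng m ->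
      kdeg (kcomp l m) = dadd (kdeg l) (kdeg m);
  kfact : forall l (m n : dg k), kdeg l = dadd m n ->
      exists! mn : kpath * kpath,
        [/\ ksrc mn.1 = krng mn.2, kdeg mn.1 = m, kdeg mn.2 = n
          & l = kcomp mn.1 mn.2]
}.

Section KGraphDefs.
Variables (k : nat) (L : kgraph k).

Definition row_finite_no_sources : Prop :=
  forall (v : kvert L) (n : dg k),
    (exists s : seq (kpath L), uniq s /\
       forall l, (l \in s) <-> (krng l = v /\ kdeg l = n)) /\
    (exists l : kpath L, krng l = v /\ kdeg l = n).

(* An infinite path: a degree-preserving functor Omega_k -> Lambda,   *)
(* given by its values x p q on the morphisms (p,q), p <= q.          *)
Definition infinite_path (x : dg k -> dg k -> kpath L) : Prop :=
  (forall p, exists v, x p p = kid v) /\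
  (forall p q, dle p q -> kdeg (x p q) = dsub q p) /\
  (forall p q t, dle p q -> dle q t ->
      ksrc (x p q) = krng (x q t) /\ x p t = kcomp (x p q) (x q t)).

Definition shift_eq (x : dg k -> dg k -> kpath L) (p q : dg k) : Prop :=
  forall m n, dle m n -> x (dadd m p) (dadd n p) = x (dadd m q) (dadd n q).

Definition aperiodic_path (x : dg k -> dg k -> kpath L) : Prop :=
  forall p q, p <> q -> ~ shift_eq x p q.

Definition aperiodic : Prop :=
  forall v : kvert L, exists x, infinite_path x /\
     krng (x (d0 k) (d0 k)) = v /\ aperiodic_path x.

End KGraphDefs.

Record nalg (R : comNzRingType) := NAlg {
  nacar :> lmodType R;
  namul : nacar -> nacar -> nacar;
  namulA : forall x y z, namul x (namul y z) = namul (namul x y) z;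
  namulDl : forall (a : R) x y z,
      namul (a *: x + y) z = a *: namul x z + namul y z;
  namulDr : forall (a : R) x y z,
      namul z (a *: x + y) = a *: namul z x + namul z y
}.

Definition nalg_hom (R : comNzRingType) (A B : nalg R) (f : A -> B) : Prop :=
  (forall (a : R) (x y : A), f (a *: x + y) = a *: f x + f y) /\
  (forall x y : A, f (namul x y) = namul (f x) (f y)).

Definition subalg (R : comNzRingType) (A : nalg R) (T : A -> Prop) : Prop :=
  [/\ T 0, (forall x y, T x -> T y -> T (x + y)),
      (forall (a : R) x, T x -> T (a *: x))
    & (forall x y, T x -> T y -> T (namul x y))].

Definition gen_subalg (R : comNzRingType) (A : nalg R) (S : A -> Prop) : A -> Prop :=
  fun x => forall T, subalg T -> (forall y, S y -> T y) -> T x.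

(* Kumjian-Pask families. p v = p_v, s l = s_l, t l = s_{l^*}.        *)
(* Generators are given for all paths, with the paper's convention    *)
(* s_v = s_{v^*} = p_v imposed as a relation (KP0).                   *)
Section KP.
Variables (k : nat) (L : kgraph k) (R : comNzRingType).

Definition KP_family (B : nalg R) (p : kvert L -> B) (s t : kpath L -> B) : Prop :=
  [/\
      (forall v, s (kid v) = p v /\ t (kid v) = p v),
      (forall v, namul (p v) (p v) = p v) /\
      (forall v w, v <> w -> namul (p v) (p w) = 0),
      (forall l m, ksrc l = krng m ->
          namul (s l) (s m) = s (kcomp l m) /\
          namul (t m) (t l) = t (kcomp l m)) /\
      (forall l, [/\ namul (p (krng l)) (s l) = s l,
                     namul (s l) (p (ksrc l)) = s l,
                     namul (p (ksrc l)) (t l) = t l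
                   & namul (t l) (p (krng l)) = t l]),
      (forall l m, kdeg l = kdeg m ->
          namul (t l) (s m) = if l == m then p (ksrc l) else 0)
    &
      (forall v (n : dg k), n <> d0 k -> forall sq : seq (kpath L), uniq sq ->
          (forall l, (l \in sq) <-> (krng l = v /\ kdeg l = n)) ->
          p v = \sum_(l <- sq) namul (s l) (t l))].

Definition KP_universal (A : nalg R) (p : kvert L -> A) (s t : kpath L -> A) : Prop :=
  KP_family p s t /\
  forall (B : nalg R) (q : kvert L -> B) (u w : kpath L -> B), KP_family q u w ->
    (exists f : A -> B, nalg_hom f /\
        (forall v, f (p v) = q v) /\ (forall l, f (s l) = u l) /\
        (forall l, f (t l) = w l)) /\
    (forall f g : A -> B, nalg_hom f -> nalg_hom g ->
        (forall v, f (p v) = q v) -> (forall l, f (s l) = u l) ->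
        (forall l, f (t l) = w l) ->
        (forall v, g (p v) = q v) -> (forall l, g (s l) = u l) ->
        (forall l, g (t l) = w l) -> forall x, f x = g x).

Variables (A : nalg R) (p : kvert L -> A) (s t : kpath L -> A).

Definition cycline (a b : kpath L) : Prop :=
  ksrc a = ksrc b /\
  forall g, krng g = ksrc a ->
    namul (s (kcomp a g)) (t (kcomp a g)) = namul (s (kcomp b g)) (t (kcomp b g)).

Definition diagD : A -> Prop :=
  gen_subalg (fun x => exists m, x = namul (s m) (t m)).

Definition cyclM : A -> Prop :=
  gen_subalg (fun x => exists a b, cycline a b /\ x = namul (s a) (t b)).

End KP.

(* Main.v *)
Require Import Defs.
From HB Require Import structures.
From mathcomp Require Import all_boot all_order all_algebra zify.
From Stdlib Require Import ClassicalEpsilon ProofIrrelevance FunctionalExtensionality.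
Set Implicit Arguments. Unset Strict Implicit. Unset Printing Implicit Defensive.

Section DG.
Variable k : nat.
Implicit Types m n d : dg k.

Lemma daddC m n : dadd m n = dadd n m.
Proof. by apply/ffunP=> i; rewrite !ffunE addnC. Qed.
Lemma daddA m n d : dadd m (dadd n d) = dadd (dadd m n) d.
Proof. by apply/ffunP=> i; rewrite !ffunE addnA. Qed.
Lemma dadd0 m : dadd m (d0 k) = m.
Proof. by apply/ffunP=> i; rewrite !ffunE addn0. Qed.
Lemma d0add m : dadd (d0 k) m = m.
Proof. by apply/ffunP=> i; rewrite !ffunE add0n. Qed.
Lemma dsub_add m n : dle m n -> dadd m (dsub n m) = n.
Proof. move/forallP=> H; apply/ffunP=> i; rewrite !ffunE; exact: subnKC (H i). Qed.
Lemma dadd_subK m n : dsub (dadd m n) m = n.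
Proof. by apply/ffunP=> i; rewrite !ffunE addKn. Qed.
Lemma dadd_inj m n n' : dadd m n = dadd m n' -> n = n'.
Proof. by move=> H; rewrite -(dadd_subK m n) H dadd_subK. Qed.
Lemma dle_refl m : dle m m.
Proof. by apply/forallP. Qed.
Lemma dle_trans m n d : dle m n -> dle n d -> dle m d.
Proof. move=> /forallP H1 /forallP H2; apply/forallP=> i; exact: leq_trans (H1 i) (H2 i). Qed.
Lemma dle_addr m n : dle m (dadd m n).
Proof. by apply/forallP=> i; rewrite ffunE leq_addr. Qed.
Lemma dle_addl m n : dle n (dadd m n).
Proof. by apply/forallP=> i; rewrite ffunE leq_addl. Qed.
Lemma dle0 m : dle (d0 k) m.
Proof. by apply/forallP=> i; rewrite ffunE. Qed.
Lemma dle_add2l d m n : dle m n -> dle (dadd d m) (dadd d n).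
Proof. move/forallP=> H; apply/forallP=> i; rewrite !ffunE leq_add2l; exact: H. Qed.
End DG.
Section Fac.
Variables (k : nat) (L : kgraph k).
Implicit Types (l u v w : kpath L) (m n d : dg k).

Definition facP l m (mn : kpath L * kpath L) : Prop :=
  [/\ ksrc mn.1 = krng mn.2, kdeg mn.1 = m, kdeg mn.2 = dsub (kdeg l) m
    & l = kcomp mn.1 mn.2].

Definition fac l m : kpath L * kpath L := epsilon (inhabits (l, l)) (facP l m).
Definition pre l m := (fac l m).1.
Definition suf l m := (fac l m).2.

Lemma fac_spec l m : dle m (kdeg l) -> facP l m (fac l m).
Proof.
move=> le; apply: epsilon_spec.
have [mn [H _]] := kfact (esym (dsub_add le)); by exists mn.
Qed.

Lemma fac_eq u v : ksrc u = krng v ->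
  pre (kcomp u v) (kdeg u) = u /\ suf (kcomp u v) (kdeg u) = v.
Proof.
move=> e.
have dl : kdeg (kcomp u v) = dadd (kdeg u) (kdeg v) by rewrite kdeg_comp.
have le : dle (kdeg u) (kdeg (kcomp u v)) by rewrite dl dle_addr.
have [mn [_ U]] := kfact dl.
have Hf := fac_spec le.
have Hf' : [/\ ksrc (fac (kcomp u v) (kdeg u)).1 = krng (fac (kcomp u v) (kdeg u)).2,
   kdeg (fac (kcomp u v) (kdeg u)).1 = kdeg u,
   kdeg (fac (kcomp u v) (kdeg u)).2 = kdeg v
   & kcomp u v = kcomp (fac (kcomp u v) (kdeg u)).1 (fac (kcomp u v) (kdeg u)).2].
  by case: Hf => ? ? e3 ?; split=> //; rewrite e3 dl dadd_subK.
have E1 := U _ Hf'.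
have E2 : mn = (u, v) by apply: U; split.
by rewrite /pre /suf -E1 E2.
Qed.

Lemma pre_deg l m : dle m (kdeg l) -> kdeg (pre l m) = m.
Proof. by move/fac_spec=> []. Qed.
Lemma suf_deg l m : dle m (kdeg l) -> kdeg (suf l m) = dsub (kdeg l) m.
Proof. by move/fac_spec=> []. Qed.
Lemma pre_suf l m : dle m (kdeg l) -> kcomp (pre l m) (suf l m) = l.
Proof. by move/fac_spec=> [] _ _ _ <-. Qed.
Lemma pre_suf_src l m : dle m (kdeg l) -> ksrc (pre l m) = krng (suf l m).
Proof. by move/fac_spec=> []. Qed.
Lemma pre_rng l m : dle m (kdeg l) -> krng (pre l m) = krng l.
Proof.
move=> le; rewrite -{2}(pre_suf le) kcomp_rng //; exact: pre_suf_src.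
Qed.
Lemma suf_src l m : dle m (kdeg l) -> ksrc (suf l m) = ksrc l.
Proof.
move=> le; rewrite -{2}(pre_suf le) kcomp_src //; exact: pre_suf_src.
Qed.

Lemma fac_eq' u v m : ksrc u = krng v -> kdeg u = m ->
  pre (kcomp u v) m = u /\ suf (kcomp u v) m = v.
Proof. by move=> e <-; apply: fac_eq. Qed.

Lemma pre_comp u w m : dle m (kdeg u) -> ksrc u = krng w ->
  pre (kcomp u w) m = pre u m /\ suf (kcomp u w) m = kcomp (suf u m) w.
Proof.
move=> le e.
have e1 : ksrc (suf u m) = krng w by rewrite suf_src.
have -> : kcomp u w = kcomp (pre u m) (kcomp (suf u m) w).
  by rewrite -kcomp_assoc ?pre_suf // pre_suf_src.
apply: fac_eq'; last exact: pre_deg.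
by rewrite kcomp_rng ?pre_suf_src.
Qed.

Lemma pre_full l : pre l (kdeg l) = l.
Proof.
have := @fac_eq l (kid (ksrc l)); rewrite kid_rng kcomp_idr; by case.
Qed.

Lemma pre_zero l : pre l (d0 k) = kid (krng l).
Proof.
have := @fac_eq (kid (krng l)) l; rewrite kid_src kdeg_id kcomp_idl; by case.
Qed.
Lemma suf_zero l : suf l (d0 k) = l.
Proof.
have := @fac_eq (kid (krng l)) l; rewrite kid_src kdeg_id kcomp_idl; by case.
Qed.

Lemma kid_inj (v w : kvert L) : kid v = kid w -> v = w.
Proof. by move=> e; rewrite -(kid_rng v) e kid_rng. Qed.

End Fac.
Section Tail.
Variables (k : nat) (L : kgraph k).
Implicit Types (l u w : kpath L) (m n d : dg k).

Lemma pre_pre (X : kpath L) m n : dle m n -> dle n (kdeg X) -> pre (pre X n) m = pre X m.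
Proof.
move=> mn nX.
have E : pre X m = pre (kcomp (pre X n) (suf X n)) m by rewrite pre_suf.
rewrite E (pre_comp _ (pre_suf_src nX)).1 // pre_deg //.
Qed.

Record tl := Tl { tf : dg k -> kpath L;
  tdeg : forall n, kdeg (tf n) = n;
  tcons : forall m n, dle m n -> pre (tf n) m = tf m }.

Lemma tl_ext (y z : tl) : (forall n, tf y n = tf z n) -> y = z.
Proof.
case: y z => f1 d1 c1 [f2 d2 c2] /= H.
have E : f1 = f2 by apply: functional_extensionality.
subst f2; f_equal; apply: proof_irrelevance.
Qed.

Definition rng (y : tl) := krng (tf y (d0 k)).

Lemma tf_le (y : tl) m n : dle m n -> dle m (kdeg (tf y n)).
Proof. by rewrite tdeg. Qed.

Lemma rng_any (y : tl) n : krng (tf y n) = rng y.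
Proof. by rewrite /rng -(tcons y (dle0 n)) pre_rng // tdeg dle0. Qed.

Lemma tf0 (y : tl) : tf y (d0 k) = kid (rng y).
Proof. by rewrite -(tcons y (dle_refl _)) pre_zero. Qed.

Lemma tf_split (y : tl) m n : dle m n ->
  ksrc (tf y m) = krng (suf (tf y n) m) /\ tf y n = kcomp (tf y m) (suf (tf y n) m).
Proof.
move=> le; rewrite -(tcons y le); split; first by apply: pre_suf_src; rewrite tdeg.
by rewrite pre_suf // tdeg.
Qed.

Definition shf_f d (y : tl) n := suf (tf y (dadd d n)) d.

Lemma shf_deg d y n : kdeg (shf_f d y n) = n.
Proof. by rewrite /shf_f suf_deg tdeg ?dadd_subK // dle_addr. Qed.

Lemma shf_cons d y m n : dle m n -> pre (shf_f d y n) m = shf_f d y m.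
Proof.
move=> le; rewrite /shf_f.
have [e1 e2] := tf_split y (dle_add2l d le).
set u := tf y (dadd d m) in e1 e2 *; set w := suf _ _ in e1 e2.
rewrite e2 (pre_comp _ e1).2; last by rewrite /u tdeg dle_addr.
apply: (fac_eq' _ _).1.
  by rewrite suf_src // /u tdeg dle_addr.
by rewrite suf_deg /u tdeg ?dadd_subK // dle_addr.
Qed.

Definition shf d y := Tl (@shf_deg d y) (@shf_cons d y).

Definition cat_f l (y : tl) n :=
  if ksrc l == rng y then pre (kcomp l (tf y n)) n else tf y n.

Lemma cat_deg l y n : kdeg (cat_f l y n) = n.
Proof.
rewrite /cat_f; case: eqP => e; last exact: tdeg.
rewrite pre_deg // kdeg_comp ?rng_any // tdeg; exact: dle_addl.
Qed.

Lemma cat_cons l y m n : dle m n -> pre (cat_f l y n) m = cat_f l y m.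
Proof.
move=> le; rewrite /cat_f; case: eqP => e; last exact: tcons.
rewrite pre_pre //; last by rewrite kdeg_comp ?rng_any // tdeg dle_addl.
have [e1 e2] := tf_split y le.
rewrite e2 -kcomp_assoc ?rng_any //.
rewrite (pre_comp _ _).1 //; last by rewrite kcomp_src ?rng_any.
by rewrite kdeg_comp ?rng_any // tdeg dle_addl.
Qed.

Definition cat l y := Tl (@cat_deg l y) (@cat_cons l y).

Lemma cat_pre l y : ksrc l = rng y -> tf (cat l y) (kdeg l) = l.
Proof.
move=> e; rewrite /= /cat_f e eqxx.
rewrite (pre_comp _ _).1 ?dle_refl ?rng_any //; exact: pre_full.
Qed.

Lemma cat_rng l y : ksrc l = rng y -> rng (cat l y) = krng l.
Proof.
move=> e; rewrite /rng /= /cat_f e eqxx pre_rng ?kcomp_rng ?rng_any //.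
exact: dle0.
Qed.

Lemma shf_rng d y : rng (shf d y) = ksrc (tf y d).
Proof.
rewrite /rng /= /shf_f dadd0.
have [e1 e2] := tf_split y (dle_refl d).
by rewrite -(pre_suf_src (tf_le y (dle_refl d))) (tcons y (dle_refl d)).
Qed.

Lemma shf_cat l y : ksrc l = rng y -> shf (kdeg l) (cat l y) = y.
Proof.
move=> e; apply: tl_ext => n; rewrite /= /shf_f /= /cat_f e eqxx.
have [e1 e2] := tf_split y (dle_addl (kdeg l) n).
have hd : kdeg (kcomp l (tf y n)) = dadd (kdeg l) n by rewrite kdeg_comp ?rng_any // tdeg.
rewrite e2 -kcomp_assoc ?rng_any //.
rewrite (pre_comp _ _).1; last by rewrite kcomp_src ?rng_any.
  by rewrite -hd pre_full; apply: (fac_eq _).2; rewrite rng_any.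
by rewrite hd dle_refl.
Qed.

Lemma cat_shf l y : tf y (kdeg l) = l -> cat l (shf (kdeg l) y) = y.
Proof.
move=> e.
have er : ksrc l = rng (shf (kdeg l) y) by rewrite shf_rng e.
apply: tl_ext => n; rewrite /= /cat_f -er eqxx /= /shf_f.
have [e1 e2] := tf_split y (dle_addr (kdeg l) n).
rewrite e in e1 e2; rewrite -e2.
by rewrite tcons // dle_addl.
Qed.

Lemma shf0 y : shf (d0 k) y = y.
Proof. by apply: tl_ext => n; rewrite /= /shf_f d0add suf_zero. Qed.

Lemma shf_shf d m y : shf m (shf d y) = shf (dadd d m) y.
Proof.
apply: tl_ext => n; rewrite /= /shf_f -daddA.
set X := tf y (dadd d (dadd m n)).
have hX : kdeg X = dadd d (dadd m n) by rewrite tdeg.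
have ld : dle d (kdeg X) by rewrite hX dle_addr.
have ls : dle m (kdeg (suf X d)) by rewrite suf_deg // hX dadd_subK dle_addr.
have EX : X = kcomp (kcomp (pre X d) (pre (suf X d) m)) (suf (suf X d) m).
  rewrite kcomp_assoc ?pre_suf //; first by rewrite pre_rng // pre_suf_src.
  exact: pre_suf_src.
have E := (@fac_eq' _ _ (kcomp (pre X d) (pre (suf X d) m)) (suf (suf X d) m) (dadd d m) _ _).2.
rewrite -EX in E; rewrite E //.
  by rewrite kcomp_src ?pre_suf_src // pre_rng.
by rewrite kdeg_comp ?pre_deg // pre_suf_src // pre_rng.
Qed.

Lemma cat_kid y : cat (kid (rng y)) y = y.
Proof.
have := @cat_shf (kid (rng y)) y; rewrite kdeg_id shf0; apply.
exact: tf0.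
Qed.

Lemma cat_cat l l' y : ksrc l = krng l' -> ksrc l' = rng y ->
  cat l (cat l' y) = cat (kcomp l l') y.
Proof.
move=> e e'.
set z := cat (kcomp l l') y.
have ez : ksrc (kcomp l l') = rng y by rewrite kcomp_src.
have hz : tf z (dadd (kdeg l) (kdeg l')) = kcomp l l'
  by rewrite -kdeg_comp // cat_pre.
have z1 : tf z (kdeg l) = l.
  rewrite -(tcons z (dle_addr (kdeg l) (kdeg l'))) hz.
  exact: (fac_eq e).1.
have z2 : tf (shf (kdeg l) z) (kdeg l') = l'.
  by rewrite /= /shf_f hz; exact: (fac_eq e).2.
rewrite -(cat_shf z1) -(cat_shf z2) shf_shf -kdeg_comp //.
by rewrite /z shf_cat.
Qed.

Lemma cyl_comp l l' y : ksrc l = krng l' ->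
  (tf y (kdeg (kcomp l l')) == kcomp l l') =
  (tf y (kdeg l) == l) && (tf (shf (kdeg l) y) (kdeg l') == l').
Proof.
move=> e; rewrite kdeg_comp //= /shf_f.
have [e1 e2] := tf_split y (dle_addr (kdeg l) (kdeg l')).
apply/eqP/andP.
  move=> H; rewrite H (fac_eq e).2 eqxx; split=> //; apply/eqP.
  by rewrite -(tcons y (dle_addr (kdeg l) (kdeg l'))) H (fac_eq e).1.
case=> /eqP h1 /eqP h2; by rewrite e2 h1 h2.
Qed.

End Tail.
From mathcomp Require boolp.
From mathcomp Require Import ring.
Import GRing.Theory.
Local Open Scope ring_scope.

Section Ops.
Variables (k : nat) (L : kgraph k) (R : comNzRingType).

Definition V := tl L -> R.

Record lop := Lop { lapp : V -> V;
  lapp_lin : forall (a : R) (F G : V),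
    lapp (fun y => a * F y + G y) = fun y => a * lapp F y + lapp G y }.

Lemma lop_ext (f g : lop) : (forall F y, lapp f F y = lapp g F y) -> f = g.
Proof.
case: f g => f1 h1 [f2 h2] /= H.
have E : f1 = f2.
  by apply: functional_extensionality => F; apply: functional_extensionality.
subst f2; f_equal; apply: proof_irrelevance.
Qed.

HB.instance Definition _ := boolp.gen_eqMixin lop.
HB.instance Definition _ := boolp.gen_choiceMixin lop.

Program Definition lzero : lop := @Lop (fun F y => 0) _.
Next Obligation. by apply: functional_extensionality => y; ring. Qed.
Program Definition ladd (f g : lop) : lop := @Lop (fun F y => lapp f F y + lapp g F y) _.
Next Obligation. by apply: functional_extensionality => y; rewrite !lapp_lin; ring. Qed.
Program Definition lopp (f : lop) : lop := @Lop (fun F y => - lapp f F y) _.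
Next Obligation. by apply: functional_extensionality => y; rewrite !lapp_lin; ring. Qed.
Program Definition lscale (c : R) (f : lop) : lop := @Lop (fun F y => c * lapp f F y) _.
Next Obligation. by apply: functional_extensionality => y; rewrite !lapp_lin; ring. Qed.

Lemma laddA : associative ladd.
Proof. by move=> f g h; apply: lop_ext => F y /=; ring. Qed.
Lemma laddC : commutative ladd.
Proof. by move=> f g; apply: lop_ext => F y /=; ring. Qed.
Lemma ladd0 : left_id lzero ladd.
Proof. by move=> f; apply: lop_ext => F y /=; ring. Qed.
Lemma laddN : left_inverse lzero lopp ladd.
Proof. by move=> f; apply: lop_ext => F y /=; ring. Qed.

HB.instance Definition _ := GRing.isZmodule.Build lop laddA laddC ladd0 laddN.

Lemma lscaleA a b v : lscale a (lscale b v) = lscale (a * b) v.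
Proof. by apply: lop_ext => F y /=; ring. Qed.
Lemma lscale1 : left_id 1 lscale.
Proof. by move=> f; apply: lop_ext => F y /=; ring. Qed.
Lemma lscaleDr : right_distributive lscale +%R.
Proof. by move=> a f g; apply: lop_ext => F y /=; ring. Qed.
Lemma lscaleDl v : {morph lscale^~ v: a b / a + b}.
Proof. by move=> a b; apply: lop_ext => F y /=; ring. Qed.

HB.instance Definition _ := GRing.Zmodule_isLmodule.Build R lop lscaleA lscale1 lscaleDr lscaleDl.

Program Definition lmul (f g : lop) : lop := @Lop (fun F => lapp f (lapp g F)) _.
Next Obligation. by rewrite !lapp_lin. Qed.

Lemma lmulA x y z : lmul x (lmul y z) = lmul (lmul x y) z.
Proof. by apply: lop_ext. Qed.
Lemma lmulDl (a : R) (x y z : lop) : lmul (a *: x + y) z = a *: lmul x z + lmul y z.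
Proof. by apply: lop_ext. Qed.
Lemma lmulDr (a : R) (x y z : lop) : lmul z (a *: x + y) = a *: lmul z x + lmul z y.
Proof. by apply: lop_ext => F y0 /=; rewrite lapp_lin. Qed.

Definition B : nalg R := @NAlg R lop lmul lmulA lmulDl lmulDr.

Lemma lapp0 F y : lapp (0 : lop) F y = 0.
Proof. by []. Qed.
Lemma lappD (f g : lop) F y : lapp (f + g) F y = lapp f F y + lapp g F y.
Proof. by []. Qed.
Lemma lapp_sum (I : Type) (s : seq I) (f : I -> lop) F y :
  lapp (\sum_(i <- s) f i) F y = \sum_(i <- s) lapp (f i) F y.
Proof.
elim: s => [|i s IH]; first by rewrite !big_nil.
by rewrite !big_cons lappD IH.
Qed.

End Ops.
Lemma sum_ind1 (T : eqType) (R : comNzRingType) (a : T) (c : R) (s : seq T) :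
  uniq s -> \sum_(l <- s) (if a == l then c else 0) = if a \in s then c else 0.
Proof.
elim: s => [|x s IH]; first by rewrite big_nil.
rewrite /= => /andP [nx us]; rewrite big_cons IH // in_cons.
case: (a =P x) => [-> | ne] /=; last by rewrite add0r.
by rewrite (negbTE nx) addr0.
Qed.

Section Fam.
Variables (k : nat) (L : kgraph k) (R : comNzRingType).
Local Notation B := (B L R).
Local Notation lop := (lop L R).

Program Definition pp (v : kvert L) : lop :=
  @Lop _ L R (fun F y => if rng y == v then F y else 0) _.
Next Obligation. by apply: functional_extensionality => y; case: ifP => _ //; ring. Qed.
Program Definition ss (l : kpath L) : lop :=
  @Lop _ L R (fun F y => if tf y (kdeg l) == l then F (shf (kdeg l) y) else 0) _.
Next Obligation. by apply: functional_extensionality => y; case: ifP => _ //; ring. Qed.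
Program Definition tt (l : kpath L) : lop :=
  @Lop _ L R (fun F y => if rng y == ksrc l then F (cat l y) else 0) _.
Next Obligation. by apply: functional_extensionality => y; case: ifP => _ //; ring. Qed.

Lemma sstt u F y : lapp (lmul (ss u) (tt u)) F y =
   if tf y (kdeg u) == u then F y else 0.
Proof.
rewrite /=; case: eqP => // e.
by rewrite shf_rng e eqxx -{2}(cat_shf e).
Qed.

Lemma fam_KP : @KP_family _ L R B pp ss tt.
Proof.
split.
- move=> v; split; apply: lop_ext => F y /=.
    rewrite kdeg_id tf0 shf0; case: eqP => [/kid_inj -> | ne]; first by rewrite eqxx.
    by case: eqP => // e; case: ne; rewrite e.
  rewrite kid_src; case: eqP => // e; by rewrite -e cat_kid.
- split=> [v | v w ne]; apply: lop_ext => F y /=.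
    by case: eqP.
  case: eqP => // e; case: eqP => // e'; by case: ne; rewrite -e -e'.
- split.
    move=> l m e; split; apply: lop_ext => F y /=.
      rewrite cyl_comp //; case: eqP => //= e1.
      by rewrite shf_shf kdeg_comp.
    rewrite kcomp_src //; case: eqP => // e1.
    by rewrite cat_rng // -e eqxx cat_cat.
  move=> l; split; apply: lop_ext => F y /=.
  + case: (tf y (kdeg l) =P l) => e; last by case: eqP.
    have -> : krng l = rng y by rewrite -e rng_any.
    by rewrite eqxx.
  + case: eqP => // e; by rewrite shf_rng e eqxx.
  + by case: eqP.
  + case: eqP => // e; by rewrite cat_rng // eqxx.
- move=> l m dlm; apply: lop_ext => F y /=.
  case: eqP => e; last by case: (l =P m) => //= E; subst m; case: eqP.
  have h := cat_pre (esym e); rewrite /= in h; rewrite -dlm h.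
  case: (l =P m) => [E | ne] /=; last by [].
  subst m.
  by rewrite shf_cat // e eqxx.
- move=> v n nz sq uq Hsq; apply: lop_ext => F y /=.
  rewrite lapp_sum.
  transitivity (\sum_(l <- sq) (if tf y n == l then F y else 0)).
    2: by rewrite big_seq [RHS]big_seq; apply: eq_bigr => l /Hsq [_ dl]; rewrite sstt dl.
  rewrite sum_ind1 //.
  have -> : (tf y n \in sq) = (rng y == v).
    apply/idP/eqP => [/Hsq [<- _] | e]; first by rewrite rng_any.
    by apply/Hsq; rewrite rng_any e tdeg.
  by [].
Qed.

End Fam.
Section Main.
Variables (k : nat) (L : kgraph k).

Lemma dsub0 (n : dg k) : dsub n (d0 k) = n.
Proof. by apply/ffunP=> i; rewrite !ffunE subn0. Qed.

Variables (x : dg k -> dg k -> kpath L) (ip : infinite_path x).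

Lemma xdeg n : kdeg (x (d0 k) n) = n.
Proof. by case: ip => _ [H _]; rewrite H ?dle0 // dsub0. Qed.

Lemma xsplit p q t : dle p q -> dle q t ->
  ksrc (x p q) = krng (x q t) /\ x p t = kcomp (x p q) (x q t).
Proof. by case: ip => _ [_ H]; apply: H. Qed.

Lemma xdeg' p q : dle p q -> kdeg (x p q) = dsub q p.
Proof. by case: ip => _ [H _]; apply: H. Qed.

Lemma xcons m n : dle m n -> pre (x (d0 k) n) m = x (d0 k) m.
Proof.
move=> le; have [e1 e2] := xsplit (dle0 m) le.
by rewrite e2; apply: (fac_eq' e1 _).1; rewrite xdeg.
Qed.

Definition mkX := Tl xdeg xcons.

Lemma shf_mkX d n : tf (shf d mkX) n = x d (dadd d n).
Proof.
rewrite /= /shf_f /=.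
have [e1 e2] := xsplit (dle0 d) (dle_addr d n).
by rewrite e2; apply: (fac_eq' e1 _).2; rewrite xdeg.
Qed.

End Main.

Lemma cyc_eq (k : nat) (L : kgraph k) (a b : kpath L) :
  aperiodic L -> ksrc a = ksrc b ->
  (forall g, krng g = ksrc a -> forall z : tl L,
     (tf z (kdeg (kcomp a g)) == kcomp a g) = (tf z (kdeg (kcomp b g)) == kcomp b g)) ->
  a = b.
Proof.
move=> ap eab H.
have [x [ip [rx apx]]] := ap (ksrc a).
set X := mkX ip.
have rX : rng X = ksrc a by [].
set y := cat a X.
have ya : tf y (kdeg a) = a by apply: cat_pre.
have sya : shf (kdeg a) y = X by apply: shf_cat.
have key : forall n, tf y (kdeg b) = b /\ tf (shf (kdeg b) y) n = tf X n.
  move=> n.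
  have rg : krng (tf X n) = ksrc a by rewrite rng_any.
  have := H _ rg y.
  have rg' : ksrc b = krng (tf X n) by rewrite rg.
  rewrite (cyl_comp _ (esym rg)) (cyl_comp _ rg') ya (eqxx a) sya !tdeg (eqxx (tf X n)) /=.
  by move/esym/andP => [/eqP -> /eqP ->].
have yb : tf y (kdeg b) = b by case: (key (d0 k)).
have syb : shf (kdeg b) y = X by apply: tl_ext => n; case: (key n).
have sXX : shf (kdeg a) X = shf (kdeg b) X.
  by rewrite -{1}syb -sya !shf_shf daddC.
have dab : kdeg a = kdeg b.
  case: (kdeg a =P kdeg b) => // ne; exfalso; apply: (apx _ _ ne).
  move=> m n le.
  have fa : x (dadd m (kdeg a)) (dadd n (kdeg a)) =
            suf (tf (shf (kdeg a) X) n) m.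
    rewrite shf_mkX.
    have [e1 e2] := xsplit ip (dle_addr (kdeg a) m) (dle_add2l (kdeg a) le).
    rewrite e2 daddC [dadd n _]daddC.
    apply: esym; apply: (fac_eq' e1 _).2.
    by rewrite xdeg' ?dle_addr // dadd_subK.
  have fb : x (dadd m (kdeg b)) (dadd n (kdeg b)) =
            suf (tf (shf (kdeg b) X) n) m.
    rewrite shf_mkX.
    have [e1 e2] := xsplit ip (dle_addr (kdeg b) m) (dle_add2l (kdeg b) le).
    rewrite e2 daddC [dadd n _]daddC.
    apply: esym; apply: (fac_eq' e1 _).2.
    by rewrite xdeg' ?dle_addr // dadd_subK.
  by rewrite fa fb sXX.
by rewrite -ya dab yb.
Qed.
Theorem lemma5p5 (k : nat) (L : kgraph k) (R : comNzRingType) (A : nalg R)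
  (p : kvert L -> A) (s t : kpath L -> A) :
  KP_universal p s t ->
  row_finite_no_sources L ->
  aperiodic L ->
  (forall a b : kpath L, ksrc a = ksrc b -> (cycline s t a b <-> a = b)) /\
  (forall x : A, cyclM s t x <-> diagD s t x).
Proof.
move=> [KPf univ] _ ap.
have [[f [[fl fm] [fp [fs ft]]]] _] := univ (B L R) (@pp _ L R) (@ss _ L R) (@tt _ L R) (fam_KP L R).
have part1 : forall a b, ksrc a = ksrc b -> (cycline s t a b <-> a = b).
  move=> a b e; split; last by move=> <-.
  case=> _ H; apply: (cyc_eq ap e) => g rg z.
  have := H g rg; move/(congr1 f); rewrite !fm !fs !ft => E.
  have E' : lmul (ss R (kcomp a g)) (tt R (kcomp a g)) =
            lmul (ss R (kcomp b g)) (tt R (kcomp b g)) := E.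
  have := congr1 (fun h => lapp h (fun _ => 1) z) E'.
  rewrite !sstt.
  case: eqP; case: eqP => //= _ _; [move/eqP | move/esym/eqP]; by rewrite oner_eq0.
split=> // x.
have eqS : forall y, (exists a b, cycline s t a b /\ y = namul (s a) (t b)) <->
                     (exists m, y = namul (s m) (t m)).
  move=> y; split.
    move=> [a [b [c ->]]]; have := (part1 a b c.1).1 c => E; subst b.
    by exists a.
  move=> [m ->]; exists m, m; split=> //; exact: (part1 m m erefl).2.
rewrite /cyclM /diagD /gen_subalg; split=> H T sT hT; apply: H => // y /eqS; exact: hT.
Qed.
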